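(* Let $m\in\mathbb{N}$. Consider the set of real-valued time series of complexity at most $m$, modulo the equivalence relation of having discrete Fréchet distance $0$, equipped with the discrete Fréchet distance. This metric space has doubling dimension $\Theta(m)$.
   Context: A time series of complexity $m$ is a vector in $\mathbb{R}^m$. For $x\in\mathbb{R}^{m_1}$, $y\in\mathbb{R}^{m_2}$, a traversal is a sequence of index pairs $(i,j)\in[m_1]\times[m_2]$ starting at $(1,1)$, ending at $(m_1,m_2)$, where each $(i,j)$ is followed by one of $(i,j+1)$, $(i+1,j)$, $(i+1,j+1)$. The discrete Fréchet distance $d_{dF}(x,y)$ is the minimum over traversals $T$ of $\max_{(i,j)\in T}|x_i-y_j|$. For a metric space $(X,d_X)$, the doubling constant $\lambda_X$ is the smallest integer such that every ball $B_X(x,r)=\{y\in X: d_X(x,y)\le r\}$, $x\in X$, $r>0$, can be covered by at most $\lambda_X$ balls of radius $r/2$ centered at points of $X$; the doubling dimension is $\log\lambda_X$. *)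

(* Defs.v *)
From HB Require Import structures.
From mathcomp Require Import all_boot all_order all_algebra.
From mathcomp Require Import all_classical all_reals.
From mathcomp Require Import Rstruct exp.
Set Implicit Arguments. Unset Strict Implicit. Unset Printing Implicit Defensive.
Import Order.TTheory GRing.Theory Num.Theory.
Local Open Scope ring_scope.
Local Open Scope classical_set_scope.

Notation RR := Rdefinitions.R.

(* A time series is a finite sequence of reals; its complexity is its length. *)
Definition time_series := seq RR.

Definition trav_step (p q : nat * nat) : bool :=
  [|| q == (p.1, p.2.+1), q == (p.1.+1, p.2) | q == (p.1.+1, p.2.+1)].

(* T is a traversal of index grid [m1] x [m2]: starts at (1,1), ends at (m1,m2)
   (here 0-based: (0,0) and (m1-1,m2-1)), and consecutive pairs are allowed steps. *)
Definition traversal (m1 m2 : nat) (T : seq (nat * nat)) : Prop :=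
  exists rest, T = (0%N, 0%N) :: rest /\ path trav_step (0%N, 0%N) rest /\
               last (0%N, 0%N) rest = (m1.-1, m2.-1).

Definition trav_cost (x y : time_series) (T : seq (nat * nat)) : RR :=
  \big[Num.max/0]_(p <- T) `|nth 0 x p.1 - nth 0 y p.2|.

Definition dF (x y : time_series) : RR :=
  inf [set c | exists T, traversal (size x) (size y) T /\ c = trav_cost x y T].

Definition TS (m : nat) (x : time_series) : Prop := (0 < size x <= m)%N.

Definition doubling_cover (m k : nat) : Prop :=
  forall x, TS m x -> forall r : RR, 0 < r ->
    exists s : seq time_series, (size s <= k)%N /\ (forall c, c \in s -> TS m c) /\
      forall y, TS m y -> dF x y <= r -> exists2 c, c \in s & dF c y <= r / 2.

Definition is_doubling_constant (m lam : nat) : Prop :=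
  doubling_cover m lam /\ forall k, doubling_cover m k -> (lam <= k)%N.

(* Main.v *)
Require Import Defs.
From HB Require Import structures.
From mathcomp Require Import all_boot all_order all_algebra.
From mathcomp Require Import all_classical all_reals.
From mathcomp Require Import Rstruct exp.
From mathcomp Require Import ring lra zify.
Import Order.TTheory GRing.Theory Num.Theory.
Local Open Scope ring_scope.

Lemma cost_ge0 x y T : 0 <= trav_cost x y T.
Proof.
rewrite /trav_cost; elim: T => [|p T IH]; first by rewrite big_nil.
by rewrite big_cons le_max IH orbT.
Qed.

Lemma cost_le x y T (d : RR) : 0 <= d ->
  (forall p, p \in T -> `|nth 0 x p.1 - nth 0 y p.2| <= d) -> trav_cost x y T <= d.
Proof.
move=> d0; rewrite /trav_cost; elim: T => [|p T IH] H; first by rewrite big_nil.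
rewrite big_cons ge_max H ?mem_head //= IH // => q qT.
by apply: H; rewrite in_cons qT orbT.
Qed.

Lemma cost_elem x y T p : p \in T ->
  `|nth 0 x p.1 - nth 0 y p.2| <= trav_cost x y T.
Proof.
rewrite /trav_cost; elim: T => [|q T IH] //.
rewrite in_cons big_cons le_max => /orP[/eqP->|/IH ->]; first by rewrite lexx.
by rewrite orbT.
Qed.

Lemma dF_ub x y T : traversal (size x) (size y) T -> dF x y <= trav_cost x y T.
Proof.
move=> HT; rewrite /dF; apply: ge_inf; last by exists T.
exists 0 => c [T' [_ ->]]; exact: cost_ge0.
Qed.

Lemma dF_lt x y (d : RR) : (exists T, traversal (size x) (size y) T) ->
  dF x y < d -> exists T, traversal (size x) (size y) T /\ trav_cost x y T < d.
Proof.
move=> [T HT] /inf_lt [].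
  by exists (trav_cost x y T); exists T.
by move=> c [T' [HT' ->]] lt; exists T'.
Qed.
Lemma step_fst p q : trav_step p q -> (p.1 <= q.1 <= p.1.+1)%N.
Proof. by case: p q => a b [c d]; rewrite /trav_step => /or3P[] /eqP[-> ->] /=; lia. Qed.
Lemma step_snd p q : trav_step p q -> (p.2 <= q.2 <= p.2.+1)%N.
Proof. by case: p q => a b [c d]; rewrite /trav_step => /or3P[] /eqP[-> ->] /=; lia. Qed.

Section PathF.
Variable f : nat * nat -> nat.
Hypothesis Hf : forall p q, trav_step p q -> (f p <= f q <= (f p).+1)%N.

Lemma path_mono p rest q : path trav_step p rest -> q \in p :: rest ->
  (f p <= f q <= f (last p rest))%N.
Proof.
elim: rest p q => [|a rest IH] p q /=; first by rewrite inE => _ /eqP ->; lia.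
move=> /andP[st pa]; have := Hf _ _ st => hpa.
rewrite in_cons => /orP[/eqP->|qin].
  have := IH a a pa (mem_head _ _); lia.
have := IH a q pa qin; lia.
Qed.

Lemma path_hit p rest j : path trav_step p rest ->
  (f p <= j <= f (last p rest))%N -> exists2 q, q \in p :: rest & f q = j.
Proof.
elim: rest p => [|a rest IH] p /=.
  by move=> _ hj; exists p; rewrite ?mem_head //; lia.
move=> /andP[st pa] hj; have := Hf _ _ st => hpa.
case: (ltnP (f p) j) => hjp; last by exists p; rewrite ?mem_head //; lia.
have [|q qin fq] := IH a pa; first lia.
by exists q; rewrite // in_cons qin orbT.
Qed.
End PathF.

Lemma trav_11 : traversal 1 1 [:: (0%N, 0%N)].
Proof. by exists [::]. Qed.

Lemma trav_extR M n T : (1 <= n)%N -> traversal M n T ->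
  traversal M n.+1 (rcons T (M.-1, n)).
Proof.
move=> n1 [rest [-> [pa la]]]; exists (rcons rest (M.-1, n)); split => //.
rewrite rcons_path pa la last_rcons /trav_step /=; split => //.
by rewrite prednK // eqxx.
Qed.

Lemma trav_extL M n T : (1 <= M)%N -> traversal M n T ->
  traversal M.+1 n (rcons T (M, n.-1)).
Proof.
move=> n1 [rest [-> [pa la]]]; exists (rcons rest (M, n.-1)); split => //.
rewrite rcons_path pa la last_rcons /trav_step /=; split => //.
by rewrite (prednK n1) eqxx orbT.
Qed.

Lemma trav_extD M n T : (1 <= M)%N -> (1 <= n)%N -> traversal M n T ->
  traversal M.+1 n.+1 (rcons T (M, n)).
Proof.
move=> M1 n1 [rest [-> [pa la]]]; exists (rcons rest (M, n)); split => //.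
rewrite rcons_path pa la last_rcons /trav_step /=; split => //.
by rewrite (prednK n1) (prednK M1) eqxx !orbT.
Qed.

Lemma trav_diag n : (1 <= n)%N -> exists T, traversal n n T /\
  forall p, p \in T -> p.1 = p.2 /\ (p.1 < n)%N.
Proof.
elim: n => [//|[|n] IH] _.
  by exists [:: (0%N,0%N)]; split; [exact: trav_11| move=> p; rewrite inE => /eqP->].
have [T [HT HP]] := IH isT.
exists (rcons T (n.+1, n.+1)); split; first exact: trav_extD.
move=> p; rewrite mem_rcons in_cons => /orP[/eqP->//|/HP[-> h]]; split=> //; lia.
Qed.

Lemma trav_ex M n : (1 <= M)%N -> (1 <= n)%N -> exists T, traversal M n T.
Proof.
move=> M1 n1.
have H1 : forall n, (1 <= n)%N -> exists T, traversal 1 n T.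
  elim=> [//|[|k] IH] _; first by exists [:: (0%N,0%N)]; exact: trav_11.
  have [T HT] := IH isT; eexists; exact: trav_extR HT.
elim: M M1 => [//|[|M] IH] _; first exact: H1.
have [T HT] := IH isT; eexists; exact: trav_extL HT.
Qed.

Lemma trav_bound M n T p : (1 <= M)%N -> (1 <= n)%N -> traversal M n T -> p \in T ->
  (p.1 < M)%N /\ (p.2 < n)%N.
Proof.
move=> M1 n1 [rest [-> [pa la]]] pin.
have := @path_mono fst step_fst _ _ _ pa pin; have := @path_mono snd step_snd _ _ _ pa pin.
rewrite la /=; lia.
Qed.

Lemma trav_hit1 M n T i : traversal M n T -> (i < M)%N -> exists2 p, p \in T & p.1 = i.
Proof.
move=> [rest [-> [pa la]]] iM; apply: ((@path_hit fst step_fst _ _ _ pa)); rewrite la /=; lia.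
Qed.

Lemma trav_hit2 M n T j : traversal M n T -> (j < n)%N -> exists2 p, p \in T & p.2 = j.
Proof.
move=> [rest [-> [pa la]]] iM; apply: ((@path_hit snd step_snd _ _ _ pa)); rewrite la /=; lia.
Qed.

Lemma dF_diag (a b : time_series) (d : RR) : size a = size b -> (1 <= size a)%N ->
  (forall j, (j < size a)%N -> `|nth 0 a j - nth 0 b j| <= d) -> dF a b <= d.
Proof.
move=> eab a1 H; have [T [HT HP]] := trav_diag _ a1.
rewrite {2}eab in HT; apply: le_trans (dF_ub _ _ _ HT) _.
apply: cost_le; first by apply: le_trans (H 0%N a1); exact: normr_ge0.
by move=> p /HP [<- pl]; apply: H.
Qed.

Lemma dF_close (a b : time_series) (d : RR) : (1 <= size a)%N -> (1 <= size b)%N ->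
  dF a b < d -> exists T, traversal (size a) (size b) T /\
   forall p, p \in T -> [/\ (p.1 < size a)%N, (p.2 < size b)%N &
                         `|nth 0 a p.1 - nth 0 b p.2| < d].
Proof.
move=> a1 b1 lt; have [T [HT ct]] := dF_lt _ _ _ (trav_ex _ _ a1 b1) lt.
exists T; split => // p pin; have [h1 h2] := trav_bound _ _ _ _ a1 b1 HT pin.
split => //; exact: le_lt_trans (cost_elem _ _ _ _ pin) ct.
Qed.

Set Implicit Arguments. Unset Strict Implicit.
Definition sg (b : bool) : RR := if b then 1 else -1.
Definition xlow m : time_series := mkseq (fun k => 10 * k%:R) m.
Definition ylow m (b : m.-tuple bool) : time_series :=
  mkseq (fun k => 10 * k%:R + sg (nth false b k)) m.

Lemma sep_arith (k q : nat) (b1 b2 : bool) :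
  `|10 * k%:R + sg b1 - (10 * q%:R + sg b2)| < 6/5 -> k = q /\ b1 = b2.
Proof.
case: (ltngtP k q) => hkq.
- have : (k%:R + 1 <= q%:R :> RR) by rewrite natr1 ler_nat.
  move=> h; rewrite ltr_norml => /andP[h1 h2]; exfalso.
  by case: b1 b2 h1 h2 => [] [] /=; lra.
- have : (q%:R + 1 <= k%:R :> RR) by rewrite natr1 ler_nat.
  move=> h; rewrite ltr_norml => /andP[h1 h2]; exfalso.
  by case: b1 b2 h1 h2 => [] [] /=; lra.
- subst q; rewrite ltr_norml => /andP[h1 h2]; split => //.
  by case: b1 b2 h1 h2 => [] [] /=; lra.
Qed.

Lemma sep_low m (b1 b2 : m.-tuple bool) (c : time_series) : (1 <= size c)%N ->
  dF c (ylow b1) < 3/5 -> dF c (ylow b2) < 3/5 -> b1 = b2.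
Proof.
move=> c1 d1 d2; case: (posnP m) => [m0|m1].
  by subst m; rewrite (tuple0 b1) (tuple0 b2).
have sy : forall b : m.-tuple bool, size (ylow b) = m by move=> b; rewrite size_mkseq.
have s1 : forall b : m.-tuple bool, (1 <= size (ylow b))%N by move=> b; rewrite sy.
have [T1 [HT1 P1]] := dF_close _ _ _ c1 (s1 b1) d1.
have [T2 [HT2 P2]] := dF_close _ _ _ c1 (s1 b2) d2.
apply: val_inj; apply: (@eq_from_nth _ false); first by rewrite !size_tuple.
move=> k; rewrite size_tuple => km.
have [p pin pk] := trav_hit2 _ _ _ k HT1 (eq_ind_r (fun z => (k < z)%N) km (sy b1)).
have [h1 _ e1] := P1 p pin.
have [q qin qp] := trav_hit1 _ _ _ p.1 HT2 h1.
have [_ h2 e2] := P2 q qin.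
rewrite sy in h2.
move: e1 e2; rewrite pk qp /ylow !nth_mkseq // => e1 e2.
have : `|10 * k%:R + sg (nth false b1 k) - (10 * q.2%:R + sg (nth false b2 q.2))| < 6/5.
  have -> : 10 * k%:R + sg (nth false b1 k) - (10 * q.2%:R + sg (nth false b2 q.2)) =
    - (nth 0 c p.1 - (10 * k%:R + sg (nth false b1 k))) + (nth 0 c p.1 - (10 * q.2%:R + sg (nth false b2 q.2))) by ring.
  apply: le_lt_trans (ler_normD _ _) _; rewrite normrN; lra.
by move/sep_arith => [<- ->].
Qed.

Lemma lower m k : (1 <= m)%N -> doubling_cover m k -> (2 ^ m <= k)%N.
Proof.
move=> m1 H.
have tx : TS m (xlow m) by rewrite /TS size_mkseq m1 leqnn.
have [s [ss [sTS cov]]] := H _ tx 1 ltr01.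
have yTS : forall b : m.-tuple bool, TS m (ylow b) by move=> b; rewrite /TS size_mkseq m1 leqnn.
have yd : forall b : m.-tuple bool, dF (xlow m) (ylow b) <= 1.
  move=> b; apply: dF_diag; rewrite ?size_mkseq // => j jm.
  rewrite !nth_mkseq // /sg; case: (nth false b j);
  rewrite opprD addrA subrr add0r ?normrN ?normr1 // opprK normr1 //.
have hs : forall b : m.-tuple bool, has (fun c => dF c (ylow b) <= 1 / 2) s.
  by move=> b; have [c cs cd] := cov _ (yTS b) (yd b); apply/hasP; exists c.
pose g (b : m.-tuple bool) : 'I_(size s) := Ordinal (etrans (esym (has_find _ _)) (hs b)).
have ginj : injective g.
  move=> b1 b2 /(congr1 val) /= e.
  have c1 := nth_find [::] (hs b1); have c2 := nth_find [::] (hs b2).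
  rewrite e in c1.
  have cin : nth [::] s (find (fun c => dF c (ylow b2) <= 1 / 2) s) \in s.
    by apply: mem_nth; rewrite -has_find.
  have := sTS _ cin; rewrite /TS => /andP[cpos _].
  apply: (sep_low cpos); [move: c1|move: c2] => /= c12; lra.
have := leq_card _ ginj; rewrite card_tuple card_bool card_ord => h.
exact: leq_trans h ss.
Qed.

Definition off (r : RR) (q : 'I_4) : RR := (2 * (nat_of_ord q)%:R - 3) / 4 * r.
Definition quant (r d : RR) : 'I_4 :=
  if d < - (r / 2) then @inord 3 0 else if d < 0 then @inord 3 1
  else if d < r / 2 then @inord 3 2 else @inord 3 3.

Lemma quant_ok r d : 0 < r -> `|d| < 5 / 4 * r -> `|d - off r (quant r d)| <= r / 2.
Proof.
move=> r0; rewrite ltr_norml => /andP[h1 h2]; rewrite /quant /off.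
case: ifP => c1; [|case: ifP => c2; [|case: ifP => c3]];
  rewrite inordK //= ler_norml; apply/andP; split; lra.
Qed.

Definition decode m (x : time_series) (r : RR)
  (code : (2 * m).-tuple bool * m.-tuple 'I_4) : time_series :=
  let u := [seq t <- iota 0 (2 * m) | nth false code.1 t] in
  let c := [seq nth 0 x (nth 0%N u j - j) + off r (nth ord0 code.2 j) | j <- iota 0 (size u)] in
  if (0 < size u <= m)%N then c else x.

Definition le2 (p q : nat * nat) := (p.1 <= q.1)%N && (p.2 <= q.2)%N.

Lemma le2_trans : transitive le2.
Proof. move=> a b c /andP[h1 h2] /andP[h3 h4]; apply/andP; split; lia. Qed.
Lemma le2_refl : reflexive le2.
Proof. by move=> a; rewrite /le2 !leqnn. Qed.

Lemma trav_sorted M n T : traversal M n T -> sorted le2 T.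
Proof.
move=> [rest [-> [pa _]]] /=; apply: sub_path pa => p q st.
have := step_fst _ _ st; have := step_snd _ _ st => /andP[h1 _] /andP[h2 _].
by rewrite /le2 h1 h2.
Qed.

Lemma upper m : (1 <= m)%N -> doubling_cover m (2 ^ (4 * m)).
Proof.
move=> m1 x tx r r0.
exists (map (decode x r) (enum {: (2 * m).-tuple bool * m.-tuple 'I_4})).
split.
  rewrite size_map -cardE card_prod !card_tuple card_bool card_ord.
  rewrite (_ : 4 = 2 ^ 2)%N // -expnM -expnD; apply: leq_pexp2l => //; lia.
split.
  move=> c /mapP[code _ ->]; rewrite /decode; case: ifP => // h.
  by rewrite /TS size_map size_iota.
move=> y ty dxy.
move: tx ty; rewrite /TS => /andP[M1 Mm] /andP[n1 nm].
set M := size x in M1 Mm; set n := size y in n1 nm.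
have [T [HT P]] := dF_close x y (5 / 4 * r) M1 n1 (ltac:(lra)).
pose a j := find (fun p : nat * nat => p.2 == j) T.
pose i j := (nth (0%N, 0%N) T (a j)).1.
have ha : forall j, (j < n)%N ->
    [/\ (a j < size T)%N, nth (0%N, 0%N) T (a j) \in T & (nth (0%N, 0%N) T (a j)).2 = j].
  move=> j jn; have [p pin pj] := trav_hit2 _ _ _ _ HT jn.
  have hs : has (fun p : nat * nat => p.2 == j) T by apply/hasP; exists p => //; apply/eqP.
  have al : (a j < size T)%N by rewrite -has_find.
  split => //; first exact: mem_nth.
  by apply/eqP; exact: (nth_find (0%N, 0%N) hs).
have hi : forall j, (j < n)%N -> (i j < M)%N /\ `|nth 0 x (i j) - nth 0 y j| < 5 / 4 * r.
  move=> j jn; have [_ pin pj] := ha j jn; have [h1 h2 h3] := P _ pin.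
  by rewrite /i; split => //; rewrite -{2}pj.
have srt := trav_sorted HT.
have mono : forall j j', (j <= j')%N -> (j' < n)%N -> (i j <= i j')%N.
  move=> j j' jj jn.
  have jn' : (j < n)%N by lia.
  have [a1 _ e1] := ha j jn'; have [a2 _ e2] := ha j' jn.
  have aa : (a j <= a j')%N.
    case: (leqP (a j) (a j')) => // lt; exfalso.
    have := sorted_leq_nth le2_trans le2_refl (0%N, 0%N) srt _ _ a2 a1 (ltnW lt).
    rewrite /le2 e1 e2 => /andP[_ h].
    have ejj : j = j' by lia.
    by subst j'; lia.
  have := sorted_leq_nth le2_trans le2_refl (0%N, 0%N) srt _ _ a1 a2 aa.
  by rewrite /le2 => /andP[h _].
pose U := mkseq (fun j => (i j + j)%N) n.
have wP : size (mkseq (fun t => t \in U) (2 * m)) == (2 * m)%N by rewrite size_mkseq.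
have qP : size (mkseq (fun j => quant r (nth 0 y j - nth 0 x (i j))) m) == m
  by rewrite size_mkseq.
pose w := Tuple wP; pose qv := Tuple qP.
exists (decode x r (w, qv)).
  by apply: map_f; rewrite mem_enum.
have Usrt : sorted ltn U.
  rewrite /U /mkseq; apply: (@homo_sorted_in _ _ (fun j => (j < n)%N)).
  - move=> j j' jn jn' jj /=; have := mono j j' (ltnW jj) jn'; lia.
  - by apply/allP => j; rewrite mem_iota.
  - exact: iota_ltn_sorted.
have uU : [seq t <- iota 0 (2 * m) | nth false w t] = U.
  apply: (irr_sorted_eq ltn_trans ltnn).
  - by apply: sorted_filter; [exact: ltn_trans| exact: iota_ltn_sorted].
  - exact: Usrt.
  - move=> t; rewrite mem_filter mem_iota /= add0n.
    case: (ltnP t (2 * m)) => tm; first by rewrite nth_mkseq // andbT.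
    rewrite andbF; apply/esym/negP => /mapP[j]; rewrite mem_iota add0n => /andP[_ jn] e.
    have := hi j jn; lia.
rewrite /decode /= uU size_mkseq n1 nm /=.
apply: dF_diag; rewrite ?size_map ?size_iota // => j jn.
rewrite (nth_map 0%N) ?size_iota // nth_iota // add0n nth_mkseq; last lia.
rewrite /U nth_mkseq // addnK.
set d := nth 0 y j - nth 0 x (i j).
have -> : nth 0 x (i j) + off r (quant r d) - nth 0 y j = - (d - off r (quant r d)) by rewrite /d; ring.
rewrite normrN; apply: quant_ok => //.
by rewrite /d distrC; have [_ ?] := hi j jn.
Qed.

Lemma log2_bound (k lam : nat) : (2 ^ k <= lam)%N ->
  k%:R <= ln (lam%:R : RR) / ln 2.
Proof.
move=> h; have l2 : 0 < ln (2 : RR) by apply: ln_gt0; lra.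
have lpos : (0 < lam)%N by apply: leq_trans h; rewrite expn_gt0.
rewrite ler_pdivlMr // mulr_natl -lnXn; last lra.
rewrite ler_ln ?posrE ?ltr0n // ?exprn_gt0 //.
by move: h; rewrite -(ler_nat RR) natrX.
Qed.


Lemma log2_ubound (k lam : nat) : (0 < lam)%N -> (lam <= 2 ^ k)%N ->
  ln (lam%:R : RR) / ln 2 <= k%:R.
Proof.
move=> lpos h; have l2 : 0 < ln (2 : RR) by apply: ln_gt0; lra.
rewrite ler_pdivrMr // mulr_natl -lnXn; last lra.
rewrite ler_ln ?posrE ?ltr0n // ?exprn_gt0 //.
by move: h; rewrite -(ler_nat RR) natrX.
Qed.

Theorem proposition5p4 :
  exists c1 c2 : RR, 0 < c1 /\ 0 < c2 /\
    forall m : nat, (1 <= m)%N ->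
      exists lam : nat, is_doubling_constant m lam /\
        c1 * m%:R <= ln (lam%:R : RR) / ln 2 <= c2 * m%:R.
Proof.
exists 1, 4; split; first lra; split; first lra.
move=> m m1.
have ex : exists n, `[< doubling_cover m n >] by exists (2 ^ (4 * m))%N; apply/asboolP; exact: upper.
case: (ex_minnP ex) => lam /asboolP Hl Hmin.
exists lam; split.
  by split => // k Hk; apply: Hmin; apply/asboolP.
have lo := lower m1 Hl.
have hi : (lam <= 2 ^ (4 * m))%N by apply: Hmin; apply/asboolP; exact: upper.
apply/andP; split.
  by rewrite mul1r; apply: log2_bound.
have -> : 4 * m%:R = (4 * m)%N%:R :> RR by rewrite natrM.
apply: log2_ubound => //; apply: leq_trans lo; rewrite expn_gt0.
by []. Qed.
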